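(* Let $\Gamma_\mu:\mathbb{R}^N_+\to\mathbb{R}^N_+$ be monotone and satisfy the small gain condition $\Gamma_\mu(s)\not\geq s$ for all $s\in\mathbb{R}^N_+\setminus\{0\}$. Let $\kappa_0>0$, $\kappa_\Gamma>\kappa_h>0$ and let $\phi:\mathbb{R}^N_+\to\mathbb{R}^N$ be defined by $$\phi(v)=\Gamma_\mu(v)\Big(1+\min\Big\{0,\frac{\kappa_\Gamma-2\|v\|}{\|v\|+\kappa_0}\Big\}\Big)+\max\{0,\kappa_h-2\|v\|\}\,e .$$ If $s\in\mathbb{R}^N_+$ satisfies $s=\phi(s)$, then $\Gamma_\mu(s)\ll s$ (i.e. $s\in\Omega(\Gamma_\mu)$) and $\|s\|<\kappa_h/2$.
   Context: On $\mathbb{R}^N$: $v\geq w$ iff $v_i\ge w_i$ for all $i$; $v>w$ iff $v\ge w$ and $v\ne w$; $v\gg w$ iff $v_i>w_i$ for all $i$; $\not\geq$ is the negation of $\geq$. $\|\cdot\|$ is the Euclidean norm and $e=(1,\dots,1)^\top\in\mathbb{R}^N$. A map $T:\mathbb{R}^N_+\to\mathbb{R}^N_+$ is monotone if $v\le w$ implies $T(v)\le T(w)$. The decay set is $\Omega(\Gamma_\mu)=\{s\in\mathbb{R}^N_+:\Gamma_\mu(s)\ll s\}$. *)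

(* Defs.v *)
(* R^N is rendered as functions 'I_N -> R over an arbitrary
   real closed field R (the statement is purely order-algebraic). *)
From HB Require Import structures.
From mathcomp Require Import all_boot all_order all_algebra.
Set Implicit Arguments. Unset Strict Implicit. Unset Printing Implicit Defensive.
Import Order.TTheory GRing.Theory Num.Theory.
Local Open Scope ring_scope.

Definition vec (R : rcfType) (N : nat) := 'I_N -> R.

Definition nonneg (R : rcfType) (N : nat) (v : vec R N) : Prop :=
  forall i, 0 <= v i.
Definition vle (R : rcfType) (N : nat) (v w : vec R N) : Prop :=
  forall i, v i <= w i.
Definition vll (R : rcfType) (N : nat) (v w : vec R N) : Prop :=
  forall i, v i < w i.
Definition vzero (R : rcfType) (N : nat) : vec R N := fun _ => 0.
Definition enorm (R : rcfType) (N : nat) (v : vec R N) : R :=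
  Num.sqrt (\sum_(i < N) v i ^+ 2).

Definition monotone (R : rcfType) (N : nat) (T : vec R N -> vec R N) : Prop :=
  forall v w, nonneg v -> nonneg w -> vle v w -> vle (T v) (T w).

Definition maps_nonneg (R : rcfType) (N : nat) (T : vec R N -> vec R N) : Prop :=
  forall v, nonneg v -> nonneg (T v).

Definition small_gain (R : rcfType) (N : nat) (T : vec R N -> vec R N) : Prop :=
  forall s, nonneg s -> s <> @vzero R N -> ~ vle s (T s).

Definition decay_set (R : rcfType) (N : nat) (T : vec R N -> vec R N) (s : vec R N) : Prop :=
  nonneg s /\ vll (T s) s.

Definition phi (R : rcfType) (N : nat) (Gamma : vec R N -> vec R N)
  (k0 kG kh : R) (v : vec R N) : vec R N :=
  fun i => Gamma v i * (1 + Num.min 0 ((kG - 2 * enorm v) / (enorm v + k0)))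
           + Num.max 0 (kh - 2 * enorm v) * 1.

(* Main.v *)
Require Import Defs.
From HB Require Import structures.
From mathcomp Require Import all_boot all_order all_algebra.
Import Order.TTheory GRing.Theory Num.Theory.
Local Open Scope ring_scope.

Theorem mainTheorem2 (R : rcfType) (N : nat) (Gamma : vec R N -> vec R N)
  (hmaps : maps_nonneg Gamma) (hmono : monotone Gamma) (hsg : small_gain Gamma)
  (k0 kG kh : R) (hk0 : 0 < k0) (hkh : 0 < kh) (hkGh : kh < kG)
  (s : vec R N) (hs : nonneg s) (hfix : s = phi Gamma k0 kG kh s) :
  decay_set Gamma s /\ enorm s < kh / 2.
Proof.
have hn0 : 0 <= enorm s by rewrite /enorm sqrtr_ge0.
have hG := hmaps s hs.
have hfi : forall i, s i = phi Gamma k0 kG kh s i by move=> i; rewrite {1}hfix.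
set n := enorm s in hn0 hfi *.
have hlt : n < kh / 2.
  rewrite ltNge; apply/negP => hge.
  have hnz : s <> @vzero R N.
    move=> hz; move: hge; rewrite /n hz /enorm /vzero.
    under eq_bigr do rewrite expr0n /=.
    rewrite big1 // sqrtr0 => h.
    have : 0 < kh / 2 by rewrite divr_gt0.
    by rewrite ltNge h.
  apply: (hsg s hs hnz) => i.
  rewrite hfi /phi.
  have -> : Num.max 0 (kh - 2 * n) = 0.
    apply/max_idPl; rewrite subr_le0.
    by rewrite -ler_pdivrMl // mulrC.
  rewrite mul0r addr0.
  set c := 1 + _.
  have hc1 : c <= 1 by rewrite /c gerDl ge_min lexx.
  have hGi := hG i.
  case: (lerP c 0) => hc.
    by apply: (le_trans _ hGi); rewrite mulr_ge0_le0.
  by rewrite ler_piMr.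
have hpos : 0 < kh - 2 * n.
  by rewrite subr_gt0 mulrC -ltr_pdivlMr.
have hc : 1 + Num.min 0 ((kG - 2 * n) / (n + k0)) = 1.
  suff -> : Num.min 0 ((kG - 2 * n) / (n + k0)) = 0 by rewrite addr0.
  apply/min_idPl; apply: divr_ge0; last by apply: addr_ge0 => //; exact: ltW.
  apply: ltW; apply: lt_trans hpos _; by rewrite ltrD2r.
split; last by [].
split => // i.
rewrite [X in _ < X]hfi /phi hc mulr1 mulr1.
rewrite (max_idPr (ltW hpos)).
by rewrite ltrDl.
Qed.
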